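(* For every integer $x\geq 3$ and each $i\in[1,8]$, there exists a $D_i$-decomposition of $K^*_{(2x+1)\times 7}$.
   Context: For a simple graph $G$, $G^*$ is the digraph with vertex set $V(G)$ and arc set $\bigcup_{\{x,y\}\in E(G)}\{(x,y),(y,x)\}$. $K_{r\times s}$ is the complete multipartite simple graph with $r$ parts each of size $s$, and $K^*_{r\times s}=(K_{r\times s})^*$. A $D$-decomposition of a digraph $K$ is a set of subdigraphs of $K$, each isomorphic to $D$, such that every arc of $K$ lies in exactly one of them. For distinct vertices $v_0,\dots,v_6$, the digraphs $D_i[v_0,v_1,\dots,v_6]$ ($i\in[1,8]$) all have vertex set $\{v_0,\dots,v_6\}$ and the following arc sets: $D_1$: $(v_1,v_0),(v_1,v_2),(v_2,v_3),(v_3,v_4),(v_4,v_5),(v_5,v_6),(v_6,v_0)$; $D_2$: $(v_1,v_0),(v_2,v_1),(v_2,v_3),(v_3,v_4),(v_4,v_5),(v_5,v_6),(v_6,v_0)$; $D_3$: $(v_1,v_0),(v_1,v_2),(v_3,v_2),(v_3,v_4),(v_4,v_5),(v_5,v_6),(v_6,v_0)$; $D_4$: $(v_1,v_0),(v_1,v_2),(v_2,v_3),(v_4,v_3),(v_4,v_5),(v_5,v_6),(v_6,v_0)$; $D_5$: $(v_1,v_0),(v_2,v_1),(v_3,v_2),(v_3,v_4),(v_4,v_5),(v_5,v_6),(v_6,v_0)$; $D_6$: $(v_1,v_0),(v_2,v_1),(v_2,v_3),(v_3,v_4),(v_5,v_4),(v_5,v_6),(v_6,v_0)$; $D_7$: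 $(v_1,v_0),(v_1,v_2),(v_3,v_2),(v_3,v_4),(v_4,v_5),(v_6,v_5),(v_6,v_0)$; $D_8$: $(v_1,v_0),(v_2,v_1),(v_2,v_3),(v_4,v_3),(v_4,v_5),(v_5,v_6),(v_6,v_0)$. $D_i$ also denotes the isomorphism type of $D_i[v_0,\dots,v_6]$. *)

(* Defs.v *)
From mathcomp Require Import all_boot.
Set Implicit Arguments. Unset Strict Implicit. Unset Printing Implicit Defensive.

(* Vertex set of K_{r x s}: part index * position in part. *)
Definition mpV (r s : nat) : Type := prod (ordinal r) (ordinal s).

Definition Kmp (r s : nat) : rel (mpV r s : finType) := fun u v => u.1 != v.1.

(* Arc relation of G^* for a simple graph G given by a symmetric
   irreflexive adjacency relation: (x,y) is an arc iff {x,y} is an edge. *)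
Definition star (V : finType) (e : rel V) : rel V := fun x y => e x y.

Definition Kstar (r s : nat) : rel (mpV r s : finType) := star (@Kmp r s).

(* Arcs of D_i[v_0,...,v_6], as pairs of indices into (v_0,...,v_6). *)
Definition ar (a b : nat) : 'I_7 * 'I_7 := (inord a, inord b).

Definition D_arcs (i : nat) : seq ('I_7 * 'I_7) :=
  match i with
  | 1 => [:: ar 1 0; ar 1 2; ar 2 3; ar 3 4; ar 4 5; ar 5 6; ar 6 0]
  | 2 => [:: ar 1 0; ar 2 1; ar 2 3; ar 3 4; ar 4 5; ar 5 6; ar 6 0]
  | 3 => [:: ar 1 0; ar 1 2; ar 3 2; ar 3 4; ar 4 5; ar 5 6; ar 6 0]
  | 4 => [:: ar 1 0; ar 1 2; ar 2 3; ar 4 3; ar 4 5; ar 5 6; ar 6 0]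
  | 5 => [:: ar 1 0; ar 2 1; ar 3 2; ar 3 4; ar 4 5; ar 5 6; ar 6 0]
  | 6 => [:: ar 1 0; ar 2 1; ar 2 3; ar 3 4; ar 5 4; ar 5 6; ar 6 0]
  | 7 => [:: ar 1 0; ar 1 2; ar 3 2; ar 3 4; ar 4 5; ar 6 5; ar 6 0]
  | 8 => [:: ar 1 0; ar 2 1; ar 2 3; ar 4 3; ar 4 5; ar 5 6; ar 6 0]
  | _ => [::]
  end.

(* A copy of a pattern digraph on vertices 'I_n (every vertex of which lies
   on an arc, as for each D_i) inside a digraph on V is given by an
   injective labelling f : 'I_n -> V (f k = v_k); its arcs are the images
   (f a, f b) of the pattern arcs (a, b).
   A D-decomposition of the digraph K (arc relation K on V) is a collection
   of such copies such that every arc of K lies in exactly one copy, and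
   no copy contains a non-arc of K: for every ordered pair (u,v), the total
   number of copy-arcs equal to (u,v) is 1 if (u,v) is an arc of K and 0
   otherwise. (Copies are therefore pairwise distinct subdigraphs.) *)
Definition copy_arc_count (V : finType) (n : nat) (D : seq ('I_n * 'I_n))
  (f : {ffun 'I_n -> V}) (u v : V) : nat :=
  count (fun a : 'I_n * 'I_n => (f a.1 == u) && (f a.2 == v)) D.

Definition is_decomposition (V : finType) (K : rel V) (n : nat)
  (D : seq ('I_n * 'I_n)) (copies : seq {ffun 'I_n -> V}) : Prop :=
  all (fun f : {ffun 'I_n -> V} => injectiveb f) copies /\
  (forall u v : V,
     \sum_(f <- copies) copy_arc_count D f u v = (K u v : nat)).

Definition has_decomposition (V : finType) (K : rel V) (n : nat)
  (D : seq ('I_n * 'I_n)) : Prop :=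
  exists copies : seq {ffun 'I_n -> V}, is_decomposition K D copies.

(* Main.v *)
Require Import Defs.
From mathcomp Require Import all_boot all_algebra.
Set Implicit Arguments. Unset Strict Implicit.
Import GRing.Theory.
Local Open Scope ring_scope.

Lemma mul2_eq0 m (Ho : odd m.+1) (w : 'I_m.+1) : w *+ 2 = 0 -> w = 0.
Proof.
rewrite Zp_mulrn => /(congr1 val) /=.
move=> /eqP; rewrite -/(dvdn _ _) => H.
apply/val_inj => /=.
have : (m.+1 %| w)%N.
  by rewrite -(@Gauss_dvdl _ _ 2) // coprime_sym coprime2n.
move/dvdn_leq; case: (w : nat) (ltn_ord w) => [|k] //= Hk /(_ isT).
by rewrite leqNgt Hk.
Qed.

Lemma mulr_eq0 m (Ho : odd m.+1) (w : 'I_m.+1) (r : nat) :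
  (r == 1)%N || (r == 2)%N || (r == 4)%N -> w *+ r = 0 -> w = 0.
Proof.
move=> /orP[/orP[]|] /eqP->; first by rewrite mulr1n.
  exact: mul2_eq0.
by rewrite (mulrnA w 2 2) => /(@mul2_eq0 m Ho) /(@mul2_eq0 m Ho).
Qed.

Lemma sum_nz (T : finZmodType) (g : T -> T) (gi : injective g) (g0 : g 0 = 0) d :
  (\sum_(y | y != 0%R) (g y == d))%N = (d != 0).
Proof.
have [->|dn0] := eqVneq d 0.
  rewrite big1 // => y yn0; apply/eqP; rewrite eqb0; apply/eqP => gy.
  by move: yn0; rewrite -g0 in gy; rewrite (gi _ _ gy) eqxx.
have /codomP [y0 dy] : d \in codom g := inj_card_onto gi (leqnn _) d.
rewrite dy in dn0 *.
have y0n : y0 != 0 by apply/eqP => y00; move: dn0; rewrite y00 g0 eqxx.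
rewrite (bigD1 y0) //= eqxx big1 // => y /andP[_ yy0].
by rewrite (inj_eq gi) (negbTE yy0).
Qed.

Lemma sum_trans (T : finZmodType) (a b u v : T) :
  (\sum_t ((t + a == u)%R && (t + b == v)%R))%N = (b - a == v - u).
Proof.
rewrite (bigD1 (u - a)) //= subrK eqxx /= big1 ?addn0.
  congr nat_of_bool; apply/idP/idP => /eqP H; apply/eqP.
    by rewrite -H [u - a + b]addrC -addrA addrAC subrr add0r.
  by rewrite addrAC -addrA H addrC subrK.
move=> t tn; case: eqP => // ta; case/eqP: tn.
by rewrite -ta addrK.
Qed.

Lemma shift0 (T : zmodType) (w : T) p r : w *+ p = w *+ (p + r) -> w *+ r = 0.
Proof.
rewrite mulrnDr => /(congr1 (fun z => z - w *+ p)).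
by rewrite subrr [w *+ p + _]addrC addrK => <-.
Qed.

Definition diffok (p q : nat) : bool :=
  [|| q == p+1, q == p+2, q == p+4, p == q+1, p == q+2 | p == q+4]%N.

Lemma diffok0 m (Ho : odd m.+1) (w : 'I_m.+1) p q :
  diffok p q -> w *+ p = w *+ q -> w = 0.
Proof.
have H := @mulr_eq0 m Ho w.
rewrite /diffok => /or4P[/eqP->|/eqP->|/eqP->|/or3P[/eqP->|/eqP->|/eqP->]] E;
 [apply: (H 1%N) | apply: (H 2%N) | apply: (H 4%N) | apply: (H 1%N) | apply: (H 2%N) | apply: (H 4%N)] => //;
 apply: shift0; [exact: E|exact: E|exact: E|exact: esym E|exact: esym E|exact: esym E].
Qed.

Definition arcok (p q : nat) : bool :=
  [|| q == p+1, q == p+2, p == q+1 | p == q+2]%N.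

Lemma gB (T : zmodType) (y z : T) p q :
  (y - z) *+ q - (y - z) *+ p = (y *+ q - y *+ p) - (z *+ q - z *+ p).
Proof.
rewrite !mulrnBl.
move: (y *+ q) (z *+ q) (y *+ p) (z *+ p) => a b c d.
rewrite !opprB addrACA [RHS]addrACA [- b - c]addrC //.
Qed.

Lemma arcok_inj m (Ho : odd m.+1) p q : arcok p q ->
  injective (fun y : 'I_m.+1 => y *+ q - y *+ p).
Proof.
move=> A y z /eqP; rewrite -subr_eq0 -gB => /eqP E.
apply/eqP; rewrite -subr_eq0; apply/eqP; move: E.
move: (y - z) => w; have H := @mulr_eq0 m Ho w.
move: A; rewrite /arcok => /or4P[/eqP->|/eqP->|/eqP->|/eqP->].
- by rewrite mulrnDr [w *+ p + _]addrC addrK; apply: H.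
- by rewrite mulrnDr [w *+ p + _]addrC addrK; apply: H.
- by rewrite mulrnDr opprD addrA subrr add0r => /eqP; rewrite oppr_eq0 => /eqP; apply: H.
- by rewrite mulrnDr opprD addrA subrr add0r => /eqP; rewrite oppr_eq0 => /eqP; apply: H.
Qed.

Definition o7 (k : nat) : 'I_7 := Ordinal (ltn_pmod k (isT : (0 < 7)%N)).

Lemma arE a b : (a < 7)%N -> (b < 7)%N -> ar a b = (o7 a, o7 b).
Proof. by move=> Ha Hb; congr pair; apply: val_inj; rewrite /= inordK // modn_small. Qed.

Definition blk m (P Q : nat -> nat) (y t1 : 'I_m.+1) (t2 : 'I_7) :
  {ffun 'I_7 -> mpV m.+1 7} :=
  [ffun j : 'I_7 => ((t1 + y *+ P j)%R, (t2 + o7 (Q j))%R)].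

Definition copies m P Q : seq {ffun 'I_7 -> mpV m.+1 7} :=
  flatten [seq flatten [seq [seq blk P Q y t1 t2 | t2 <- enum 'I_7]
                       | t1 <- enum 'I_m.+1]
          | y <- enum 'I_m.+1 & y != 0].

Lemma copiesP m P Q f : f \in copies m P Q ->
  exists y t1 t2, y != 0 /\ f = blk P Q y t1 t2.
Proof.
case/flattenP => s1 /mapP [y]; rewrite mem_filter => /andP [yn0 _] ->.
case/flattenP => s2 /mapP [t1 _ ->] /mapP [t2 _ ->].
by exists y, t1, t2.
Qed.

Lemma count_sum (T : Type) (a : pred T) s : count a s = (\sum_(x <- s) a x)%N.
Proof. by rewrite -sum1_count big_mkcond. Qed.

Lemma sum_trans' (T : finZmodType) (a b u v : T) :
  (\sum_(t <- enum T) ((t + a == u)%R && (t + b == v)%R))%N = (b - a == v - u).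
Proof. by rewrite big_enum /= -sum_trans; apply: eq_bigl => t; rewrite inE. Qed.

Lemma inner m (D : seq ('I_7 * 'I_7)) (P Q : nat -> nat) (y : 'I_m.+1) (u v : mpV m.+1 7) :
  (\sum_(t1 <- enum 'I_m.+1) \sum_(t2 <- enum 'I_7)
     @copy_arc_count (mpV m.+1 7 : finType) 7 D (blk P Q y t1 t2) u v)%N =
  (\sum_(a <- D) ((y *+ P a.2 - y *+ P a.1 == v.1 - u.1)%R &&
       (o7 (Q a.2) - o7 (Q a.1) == v.2 - u.2)%R))%N.
Proof.
case: u v => [u1 u2] [v1 v2] /=.
under eq_bigr => t1 _ do under eq_bigr => t2 _ do rewrite /copy_arc_count count_sum.
rewrite exchange_big /=.
under eq_bigr => t2 _ do rewrite exchange_big /=.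
rewrite exchange_big /=; apply: eq_bigr => a _.
have E : forall a1 b1 a2 b2 : bool,
  ([&& a1 && b1, a2 & b2] : nat) = ((b1 && b2) * (a1 && a2))%N by do 4 case.
under eq_bigr => t1 _ do under eq_bigr => t2 _ do
  rewrite !ffunE /= !xpair_eqE E.
by rewrite -big_distrlr /= !sum_trans' mulnb andbC.
Qed.

Lemma construct m (Ho : odd m.+1) (D : seq ('I_7 * 'I_7)) (P Q : nat -> nat)
  (HD : all (fun a : 'I_7 * 'I_7 => arcok (P a.1) (P a.2)) D)
  (Hc : forall d : 'I_7,
        count (fun a : 'I_7 * 'I_7 => o7 (Q a.2) - o7 (Q a.1) == d) D = 1%N)
  (Hi : forall j l : 'I_7, j != l ->
        o7 (Q j) = o7 (Q l) -> diffok (P j) (P l)) :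
  has_decomposition (@Kstar m.+1 7) D.
Proof.
exists (copies m P Q); split.
  apply/allP => f /copiesP [y [t1 [t2 [yn0 ->]]]].
  apply/injectiveP => j l; rewrite !ffunE => E.
  have /= E1 := congr1 fst E; have /= E2 := congr1 snd E.
  move/addrI: E1 => E1; move/addrI: E2 => E2.
  case: (eqVneq j l) => // jl.
  by move: yn0; rewrite (diffok0 Ho (Hi _ _ jl E2) E1) eqxx.
move=> u v.
rewrite big_flatten /= big_map big_filter.
under eq_bigr => y _ do rewrite big_flatten big_map.
under eq_bigr => y _ do under eq_bigr => t1 _ do rewrite big_map.
under eq_bigr => y _ do rewrite inner.
rewrite exchange_big /= big_seq.
under eq_bigr => a aD.
  have Ha : arcok (P a.1) (P a.2) by move/allP: HD => /(_ a aD).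
  rewrite big_enum_cond /=.
  idtac.
  under eq_bigr => y _ do rewrite andbC -mulnb.
  rewrite -big_distrr /= (sum_nz (arcok_inj Ho Ha)); last by rewrite !mul0rn subrr.
  over.
rewrite -big_seq -big_distrl /= -count_sum Hc /Kstar /star /Kmp subr_eq0 mul1n.
by rewrite eq_sym.
Qed.

Lemma memo7 (d : 'I_7) : d \in map o7 (iota 0 7).
Proof.
apply/mapP; exists (val d); first by rewrite mem_iota ltn_ord.
by apply: val_inj; rewrite /= modn_small.
Qed.

Lemma construct' m (Ho : odd m.+1) (D : seq ('I_7 * 'I_7)) (Ps Qs : seq nat)
  (C1 : all (fun a : 'I_7 * 'I_7 => arcok (nth 0 Ps a.1) (nth 0 Ps a.2)) D)
  (C2 : all (fun d : 'I_7 => count (fun a : 'I_7 * 'I_7 =>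
          o7 (nth 0 Qs a.2) - o7 (nth 0 Qs a.1) == d) D == 1%N) (map o7 (iota 0 7)))
  (C3 : all (fun j : 'I_7 => all (fun l : 'I_7 => [|| j == l,
          o7 (nth 0 Qs j) != o7 (nth 0 Qs l) |
          diffok (nth 0 Ps j) (nth 0 Ps l)]) (map o7 (iota 0 7))) (map o7 (iota 0 7))) :
  has_decomposition (@Kstar m.+1 7) D.
Proof.
apply: (construct Ho C1).
  by move=> d; apply/eqP; move/allP: C2; apply; rewrite memo7.
move=> j l jl E; move/allP: C3 => /(_ j (memo7 _)) /allP /(_ l (memo7 _)).
by rewrite (negbTE jl) E eqxx.
Qed.

Lemma all_i m (Ho : odd m.+1) i (hi1 : (1 <= i)%N) (hi8 : (i <= 8)%N) :
  has_decomposition (@Kstar m.+1 7) (D_arcs i).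
Proof.
case: i hi1 hi8 => [|[|[|[|[|[|[|[|[|i]]]]]]]]] // _ _; rewrite /D_arcs !arE //.
- by apply: (@construct' m Ho _ [:: 0; 1; 2; 3; 4; 3; 2] [:: 0; 0; 1; 3; 1; 4; 3]%N); vm_compute.
- by apply: (@construct' m Ho _ [:: 0; 1; 2; 3; 4; 3; 2] [:: 0; 1; 0; 2; 0; 3; 3]%N); vm_compute.
- by apply: (@construct' m Ho _ [:: 0; 1; 2; 3; 4; 3; 2] [:: 0; 1; 3; 2; 0; 3; 0]%N); vm_compute.
- by apply: (@construct' m Ho _ [:: 0; 1; 2; 3; 4; 3; 2] [:: 0; 1; 1; 3; 2; 5; 2]%N); vm_compute.
- by apply: (@construct' m Ho _ [:: 0; 1; 2; 1; 2; 3; 2] [:: 0; 1; 0; 0; 2; 5; 3]%N); vm_compute.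
- by apply: (@construct' m Ho _ [:: 0; 1; 2; 3; 4; 3; 2] [:: 0; 0; 1; 3; 6; 5; 2]%N); vm_compute.
- by apply: (@construct' m Ho _ [:: 0; 1; 2; 3; 4; 3; 2] [:: 0; 0; 1; 3; 2; 5; 3]%N); vm_compute.
- by apply: (@construct' m Ho _ [:: 0; 1; 2; 3; 4; 3; 2] [:: 0; 0; 1; 3; 2; 5; 2]%N); vm_compute.
Qed.

Local Close Scope ring_scope.

Theorem lemma3p4 (x i : nat) (hx : 3 <= x) (hi1 : 1 <= i) (hi8 : i <= 8) :
  has_decomposition (@Kstar (2 * x + 1) 7) (D_arcs i).
Proof.
rewrite addn1; apply: all_i => //.
by rewrite /= oddM.
Qed.
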